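(* Let $\mathcal T$ be the suffix tree of a text of length $n$ and $d=\lceil\log_2 n\rceil$. For any sequence of nodes $u_1,\dots,u_t$ of $\mathcal T$ with $u_i=\mathrm{wlink}(u_{i-1},a_{i-1})$ for some symbols $a_{i-1}$ ($2\le i\le t$), at most one of the Weiner links $\mathrm{wlink}(u_{i-1},a_{i-1})$ is difficult.
   Context: For a node $v$ of $\mathcal T$ whose path label is $p$ and a symbol $c$ such that $cp$ occurs in the text, $\mathrm{wlink}(v,c)$ is the locus of $cp$ in $\mathcal T$. A node is heavy if it has at least $d$ leaf descendants and light otherwise. A Weiner link $\mathrm{wlink}(v,a)$ is difficult if its target node is light and its source node $v$ is heavy. *)

(* Defs.v *)
From mathcomp Require Import all_boot.
Set Implicit Arguments. Unset Strict Implicit. Unset Printing Implicit Defensive.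

Section SuffixTree.
Variable T : eqType.
Implicit Types (t p q : seq T) (c : T).

Definition factors t : seq (seq T) :=
  undup [seq take j (drop i t) | i <- iota 0 (size t).+1, j <- iota 0 (size t).+1].

Definition right_maximal t p : bool :=
  has (fun a => has (fun b => [&& a != b, infix (rcons p a) t & infix (rcons p b) t]) t) t.

(* The nodes of the (compacted) suffix tree of t are identified with their
   path labels: the root (empty label), the internal nodes (right-maximal
   factors) and the leaves (non-empty suffixes; the text is assumed to end
   with a unique terminator symbol). *)
Definition st_node t p : bool :=
  [|| p == [::], right_maximal t p | (p != [::]) && suffix p t].

Definition st_nodes t : seq (seq T) := [seq p <- factors t | st_node t p].

Definition st_desc p q : bool := prefix p q.

Definition st_leaf t p : bool :=
  st_node t p && all (fun q => st_desc p q ==> (q == p)) (st_nodes t).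

Definition leaf_desc t p : nat :=
  count (fun q => st_leaf t q && st_desc p q) (st_nodes t).

Definition locus t (s v : seq T) : Prop :=
  st_node t v /\ prefix s v /\ (forall w, st_node t w -> prefix s w -> prefix v w).

Definition wlink t (v : seq T) c (u : seq T) : Prop :=
  st_node t v /\ infix (c :: v) t /\ locus t (c :: v) u.

Definition heavy t (d : nat) p : bool := d <= leaf_desc t p.
Definition light t (d : nat) p : bool := ~~ heavy t d p.

Definition difficult t d (v u : seq T) : bool := light t d u && heavy t d v.

End SuffixTree.

(* Main.v *)
Require Import Defs.
From mathcomp Require Import all_boot.
Set Implicit Arguments. Unset Strict Implicit.

Section H.
Variable T : eqType.

Lemma mem_factors (t p : seq T) : (p \in factors t) = infix p t.
Proof.
rewrite /factors mem_undup; apply/idP/idP.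
- case/allpairsP=> [[i j] /= [_ _ ->]].
  apply: (infix_trans (prefixW (prefix_take _ _))).
  exact: suffixW (suffix_drop _ _).
- case/infixP=> x [y] Et; apply/allpairsP => /=; exists (size x, size p) => /=.
  have Hi k : (k \in iota 0 (size t).+1) = (k <= size t) by rewrite mem_iota.
  rewrite !Hi Et !size_cat; split.
  - exact: leq_addr.
  - by rewrite addnCA leq_addr.
  - by rewrite drop_size_cat // take_size_cat.
Qed.

Lemma end_uniq (s a b : seq T) (dollar : T) : dollar \notin s ->
  s ++ [:: dollar] = a ++ dollar :: b -> b = [::].
Proof.
move=> Hd; case/lastP: b => [//|b e].
rewrite cats1 -rcons_cons -rcons_cat => /eqP; rewrite eqseq_rcons.
case/andP=> /eqP Es _; move: Hd; rewrite Es mem_cat in_cons eqxx orbT //.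
Qed.

Lemma suffix_ext (s q z : seq T) (dollar : T) : dollar \notin s ->
  q != [::] -> suffix q (s ++ [:: dollar]) -> infix (q ++ z) (s ++ [:: dollar]) ->
  z = [::].
Proof.
move=> Hd; case/lastP: q => [//|q0 e] _ /suffixP [w Ew].
have Ee : e = dollar.
  move/eqP: Ew; rewrite cats1 -rcons_cat eqseq_rcons => /andP[_ /eqP] //.
subst e; case/infixP=> x [y] Et.
have : s ++ [:: dollar] = (x ++ q0) ++ dollar :: (z ++ y).
  by rewrite Et -cats1 -!catA.
by move/(end_uniq Hd); case: (z).
Qed.

Lemma leaf_suffix (s : seq T) (dollar : T) q :
  st_leaf (s ++ [:: dollar]) q -> (q != [::]) && suffix q (s ++ [:: dollar]).
Proof.
set t := s ++ _.
case/andP=> Hn /allP Hall.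
have Hmem : forall w, w != [::] -> suffix w t -> w \in st_nodes t.
  move=> w Hw Hs; rewrite mem_filter mem_factors (suffixW Hs) andbT.
  by rewrite /st_node Hw Hs !orbT.
case/or3P: Hn => [/eqP Eq | Hr | //].
  have Ht : t != [::] by rewrite /t; case: (s).
  have := Hall t (Hmem t Ht (suffix_refl _)).
  by rewrite Eq /st_desc prefix0s /= (negbTE Ht).
case/hasP: Hr => a _ /hasP [b _ /and3P [_ Hi _]].
case/infixP: Hi => x [y] Et.
have Hw : rcons q a ++ y \in st_nodes t.
  apply: Hmem; first by case: (q).
  by rewrite Et; exact: suffix_suffix.
have := Hall _ Hw; rewrite /st_desc -cats1 -catA prefix_prefix /=.
move/eqP/(congr1 size); rewrite !size_cat /= => /eqP.
by rewrite -{2}(addn0 (size q)) eqn_add2l.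
Qed.

Lemma suffix_leaf (s : seq T) (dollar : T) q : dollar \notin s ->
  q != [::] -> suffix q (s ++ [:: dollar]) -> st_leaf (s ++ [:: dollar]) q.
Proof.
move=> Hd Hq Hs; rewrite /st_leaf /st_node Hq Hs !orbT /=.
apply/allP => w; rewrite mem_filter mem_factors => /andP[_ Hi].
apply/implyP; rewrite /st_desc => /prefixP [z Ew].
rewrite Ew in Hi; rewrite Ew (suffix_ext Hd Hq Hs Hi) cats0 //.
Qed.

Lemma wlink_mono (s : seq T) (dollar : T) v c u : dollar \notin s ->
  wlink (s ++ [:: dollar]) v c u ->
  leaf_desc (s ++ [:: dollar]) u <= leaf_desc (s ++ [:: dollar]) v.
Proof.
set t := s ++ _.
move=> Hd [_ [_ [_ [Hp _]]]].
apply: (@leq_trans (count (fun q => st_leaf t q && prefix (c :: v) q) (st_nodes t))).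
  apply: sub_count => q /andP [-> H] /=; exact: prefix_trans Hp H.
have [-> | Hv] := eqVneq v [::].
  by apply: sub_count => q /andP [-> _]; rewrite /st_desc prefix0s.
rewrite /leaf_desc -!size_filter.
have Hu : uniq (st_nodes t) by apply: filter_uniq; apply: undup_uniq.
set s1 := filter _ _.
have Hs1 : forall q, q \in s1 -> q = c :: behead q.
  move=> q; rewrite mem_filter => /andP [/andP [_]].
  by case: q => //= x q /andP [/eqP ->].
rewrite -(size_map behead); apply: uniq_leq_size.
  rewrite map_inj_in_uniq; first exact: filter_uniq.
  by move=> q1 q2 H1 H2 E; rewrite (Hs1 _ H1) (Hs1 _ H2) E.
move=> x /mapP [q Hq ->].
move: (Hq); rewrite mem_filter => /andP [/andP [Hl Hpr] Hqn].
have /andP [Hq0 Hqs] := leaf_suffix Hl.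
move: Hpr; rewrite (Hs1 _ Hq) prefix_cons => /andP [_ Hpv] /=.
have Hne : behead q != [::].
  by apply: contra Hv => /eqP E; rewrite E prefixs0 in Hpv.
have Hsb : suffix (behead q) t.
  by apply: suffix_trans Hqs; rewrite {2}(Hs1 _ Hq); exact: suffix_cons.
rewrite mem_filter (suffix_leaf Hd Hne Hsb) /st_desc Hpv /=.
by rewrite mem_filter mem_factors (suffixW Hsb) /st_node Hne Hsb !orbT.
Qed.

End H.

Theorem proposition7 (T : eqType) (s : seq T) (dollar : T)
    (us : seq (seq T)) (as_ : seq T) :
  dollar \notin s ->
  let t := s ++ [:: dollar] in
  let d := up_log 2 (size t) in
  size as_ = (size us).-1 ->
  (forall i, i.+1 < size us ->
     wlink t (nth [::] us i) (nth dollar as_ i) (nth [::] us i.+1)) ->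
  forall i j, i.+1 < size us -> j.+1 < size us ->
    difficult t d (nth [::] us i) (nth [::] us i.+1) ->
    difficult t d (nth [::] us j) (nth [::] us j.+1) ->
    i = j.
Proof.
move=> Hd t d _ Hw.
pose ld k := leaf_desc t (nth [::] us k).
have step : forall k, k.+1 < size us -> ld k.+1 <= ld k.
  by move=> k Hk; apply: (wlink_mono Hd (Hw k Hk)).
have mono : forall n m, m <= n -> n < size us -> ld n <= ld m.
  elim=> [|n IH] m Hmn Hn; first by case: m Hmn.
  rewrite leq_eqVlt in Hmn; case/orP: Hmn => [/eqP -> // | Hmn].
  apply: leq_trans (step n Hn) _; apply: IH => //; exact: ltnW.
have key : forall i j, i < j -> j.+1 < size us ->
    difficult t d (nth [::] us i) (nth [::] us i.+1) ->
    difficult t d (nth [::] us j) (nth [::] us j.+1) -> False.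
  move=> i j Hij Hj /andP [Hli _] /andP [_ Hhj].
  move: Hli; rewrite /light /heavy -ltnNge => Hli.
  have := mono j i.+1 Hij (ltnW Hj).
  rewrite /ld => Hle.
  have := leq_trans Hhj Hle; rewrite leqNgt Hli //.
move=> i j Hi Hj Di Dj.
case: (ltngtP i j) => // Hij; exfalso.
- exact: key Hij Hj Di Dj.
- exact: key Hij Hi Dj Di.
Qed.
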